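(* Let $k\ge0$ be an integer, let $X_0>1$ be a deterministic real number, and let $X_1,\dots,X_k$ be nonnegative random variables satisfying, for every $0\le i<k$, \[ X_{i+1}-1\ge 2(X_i-1)\qquad\text{and}\qquad \mathbb{E}[X_{i+1}\mid X_0,\dots,X_i]\le X_i^2. \] If $\tau\ge 1+4(X_0-1)$, then \[ \Pr\left[X_k\ge\tau^{2^k}\right]\le 48\left(\frac{X_0-1}{\tau-1}\right)^2. \] *)

(* Defs.v *)
From HB Require Import structures.
From mathcomp Require Import all_boot all_order all_algebra.
From mathcomp Require Import all_classical all_reals all_analysis.
Set Implicit Arguments. Unset Strict Implicit. Unset Printing Implicit Defensive.
Import Order.TTheory GRing.Theory Num.Theory.
Local Open Scope classical_set_scope.
Local Open Scope ring_scope.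

Definition hist_gen d (T : measurableType d) (R : realType)
  (X : nat -> T -> R) (i : nat) : set (set T) :=
  [set A | exists j, (j <= i)%N /\ exists B : set R, measurable B /\ A = X j @^-1` B].

Definition hist d (T : measurableType d) (R : realType)
  (X : nat -> T -> R) (i : nat) : set (set T) :=
  <<s hist_gen X i >>.

(* E[Y | sigma(X_0..X_i)] <= Z for nonnegative Y and sigma(X_0..X_i)-measurable
   Z, stated via the defining property of conditional expectation:
   for every A in sigma(X_0..X_i), E[Y 1_A] <= E[Z 1_A]. *)
Definition cond_exp_le d (T : measurableType d) (R : realType)
  (P : probability T R) (X : nat -> T -> R) (i : nat) (Y Z : T -> R) : Prop :=
  forall A, hist X i A ->
    (\int[P]_(t in A) (Y t)%:E <= \int[P]_(t in A) (Z t)%:E)%E.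

(* Main.v *)
Require Import Defs.
From HB Require Import structures.
From mathcomp Require Import all_boot all_order all_algebra.
From mathcomp Require Import all_classical all_reals all_analysis.
From mathcomp Require Import measurable_realfun.
From mathcomp Require Import ring lra.
Import Order.TTheory GRing.Theory Num.Theory.
Local Open Scope classical_set_scope.
Local Open Scope ring_scope.

Definition Phi {R : realType} (l x : R) : R := (Order.min x l / l) ^+ 2.

Lemma Phi_lt (R : realType) (l x : R) : 0 < l -> x <= l -> Phi l x = (x / l) ^+ 2.
Proof. by move=> l0 xl; rewrite /Phi min_l. Qed.

Lemma Phi_ge (R : realType) (l x : R) : 0 < l -> l <= x -> Phi l x = 1.
Proof. by move=> l0 xl; rewrite /Phi min_r // divff ?expr1n // gt_eqF. Qed.

Lemma Phi_ge0 (R : realType) (l x : R) : 0 <= Phi l x.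
Proof. exact: sqr_ge0. Qed.

Lemma Phi_le1 (R : realType) (l x : R) : 0 < l -> 0 <= x -> Phi l x <= 1.
Proof.
move=> l0 x0; case: (leP x l) => xl; last by rewrite Phi_ge // ltW.
rewrite Phi_lt //; rewrite expr_le1 //; last by rewrite divr_ge0 // ltW.
by rewrite ler_pdivrMr // mul1r.
Qed.

Lemma Phi_le_sq (R : realType) (l x : R) : 0 < l -> 0 <= x -> Phi l x <= (x / l) ^+ 2.
Proof.
move=> l0 x0; case: (leP x l) => xl; first by rewrite Phi_lt.
rewrite Phi_ge //; last exact: ltW.
apply: exprn_ege1.
by rewrite ler_pdivlMr // mul1r ltW.
Qed.

Lemma keyA {R : realFieldType} (v d : R) : 0 < v ->
  1 + 4 / (v^+2 + 2*v) * (d+1)^+2 <= (d/(v/2))^+2 + 4/(v^+2+2*v) * ((v^+2+2*v)/2 + 1).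
Proof.
move=> v0.
have h1 : 0 < v^+2 + 2*v by nra.
have -> : (d / (v/2))^+2 = 4 * (d*d) / (v*v) by rewrite expr2; field; lra.
rewrite !expr2.
set w := v * v + 2 * v.
have hw : w = v*(v+2) by rewrite /w; ring.
rewrite hw.
have e : 4 / (v * (v + 2)) * ((v * (v + 2)) / 2 + 1) = 2 + 4/(v*(v+2)) by field; nra.
rewrite e.
rewrite -subr_ge0.
have -> : 4 * (d * d) / (v * v) + (2 + 4 / (v * (v + 2))) - (1 + 4 / (v * (v + 2)) * ((d + 1) * (d + 1)))
  = ((v+2)*4*(d*d) + v*v*(v+2) - 4*v*(d*d+2*d)) / (v*v*(v+2)) by field; nra.
apply: divr_ge0; last by nra.
have := sqr_ge0 (2*d - v); nra.
Qed.

Lemma keyG {R : realFieldType} (v d y : R) : 0 < v -> 2 * d <= y -> 2 * y <= v^+2 + 2*v ->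
  0 <= 2*(v+2)*d^+2 - 2*(v^+2+2*v)*d + (v^+2+2*v)*y - y^+2.
Proof.
move=> v0 h1 h2.
have a1 : 0 <= (y - 2*d) * ((v^+2+2*v) - 2*y) by apply: mulr_ge0; lra.
have a2 : 0 <= (y - 2*d) * (2*(v+2)*(2*d - v)^+2 + v^+3)
  by apply: mulr_ge0; [lra| have := sqr_ge0 (2*d-v); nra].
have a3 : 0 <= ((v^+2+2*v) - 2*y) * (v * d^+2) by apply: mulr_ge0; [lra|nra].
nra.
Qed.

Lemma key (R : realType) (v d y : R) : 0 < v -> d <= v / 2 -> 2 * d <= y ->
  Phi ((v^+2+2*v)/2) y + 4/(v^+2+2*v) * (d+1)^+2
  <= Phi (v/2) d + 4/(v^+2+2*v) * (y+1).
Proof.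
move=> v0 dv dy.
have w0 : 0 < v^+2 + 2*v by nra.
have L0 : 0 < (v^+2+2*v)/2 by lra.
rewrite (@Phi_lt _ (v/2)) //; last by lra.
case: (leP y ((v^+2+2*v)/2)) => yL.
  rewrite Phi_lt //.
  have G := @keyG _ v d y v0 dy (ltac:(lra) : 2 * y <= v^+2 + 2*v).
  rewrite -subr_ge0.
  have -> : (d / (v / 2)) ^+ 2 + 4 / (v ^+ 2 + 2 * v) * (y + 1) -
    ((y / ((v ^+ 2 + 2 * v) / 2)) ^+ 2 + 4 / (v ^+ 2 + 2 * v) * (d + 1) ^+ 2)
    = 4 * (2*(v+2)*d^+2 - 2*(v^+2+2*v)*d + (v^+2+2*v)*y - y^+2) / (v^+2+2*v)^+2.
    by field; lra.
  by apply: divr_ge0; [nra| exact: sqr_ge0].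
rewrite Phi_ge //; last by lra.
apply: (le_trans (@keyA _ v d v0)); rewrite lerD2l; apply: ler_wpM2l.
  by apply: divr_ge0; lra.
by lra.
Qed.

Lemma mPhi d (T : measurableType d) (R : realType) (f : T -> R) (c : R) :
  measurable_fun setT f -> measurable_fun setT (fun t => Phi c (f t - 1)).
Proof.
move=> mf; rewrite /Phi.
apply: measurable_funX.
apply: (measurable_funM (f := fun t => Order.min (f t - 1) c) (g := cst c^-1)); last exact: measurable_cst.
apply: (measurable_minr (f := fun t => f t - 1) (g := cst c)); last exact: measurable_cst.
apply: (measurable_funB (f := f) (g := cst 1)) => //; exact: measurable_cst.
Qed.

Lemma step d (T : measurableType d) (R : realType) (P : probability T R)
  (Xi Xj : T -> R) (v : R) :
  0 < v -> measurable_fun setT Xi -> measurable_fun setT Xj ->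
  (forall t, 0 <= Xi t) -> (forall t, 0 <= Xj t) ->
  {ae P, forall t, 2 * (Xi t - 1) <= Xj t - 1} ->
  (\int[P]_(t in [set t | (Xi t < 1 + v / 2)%R]) (Xj t)%:E <=
   \int[P]_(t in [set t | (Xi t < 1 + v / 2)%R]) (Xi t ^+ 2)%R%:E)%E ->
  (\int[P]_t (Phi ((v^+2 + 2 * v) / 2) (Xj t - 1))%R%:E <=
   \int[P]_t (Phi (v / 2) (Xi t - 1))%R%:E)%E.
Proof.
move=> v0 mXi mXj Xi0 Xj0 hae hce.
have w0 : 0 < v^+2 + 2*v by nra.
have L0 : 0 < (v^+2+2*v)/2 by lra.
have l0 : 0 < v/2 by lra.
set B := [set t | (Xi t < 1 + v / 2)%R] in hce *.
have mB : measurable B.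
  have := mXi measurableT _ (measurable_itv `]-oo, (1 + v/2)[); rewrite setTI.
  suff -> : B = Xi @^-1` `]-oo, (1 + v/2)[ by [].
  by apply/seteqP; split => t /=; rewrite in_itv /=.
have mPj : measurable_fun setT (fun t => (Phi ((v^+2 + 2 * v) / 2) (Xj t - 1))%:E).
  by apply/measurable_EFinP; exact: mPhi.
have mPi : measurable_fun setT (fun t => (Phi (v / 2) (Xi t - 1))%:E).
  by apply/measurable_EFinP; exact: mPhi.
rewrite -(setUv B) !ge0_integral_setU //; last first.
- by apply/disj_setPCl.
- by move=> t _; rewrite lee_fin Phi_ge0.
- by rewrite setUv.
- exact: measurableC.
- by apply/disj_setPCl.
- by move=> t _; rewrite lee_fin Phi_ge0.
- by rewrite setUv.
- exact: measurableC.
have hae' := hae.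
apply: leeD; last first.
  apply: ae_ge0_le_integral => //.
  - exact: measurableC.
  - by move=> t _; rewrite lee_fin Phi_ge0.
  - exact: measurable_funS mPj.
  - by move=> t _; rewrite lee_fin Phi_ge0.
  - exact: measurable_funS mPi.
  apply: filterS hae => t ht nBt; rewrite lee_fin.
  have hB : 1 + v / 2 <= Xi t by rewrite leNgt; apply/negP.
  rewrite (@Phi_ge _ (v/2)) //; last by lra.
  apply: Phi_le1 => //; lra.
set b := 4 / (v^+2 + 2*v).
have b0 : 0 <= b by rewrite /b divr_ge0 //; lra.
have h1 : (\int[P]_(t in B) (Phi ((v^+2 + 2 * v) / 2) (Xj t - 1) + b * Xi t ^+ 2)%:E <=
          \int[P]_(t in B) (Phi (v / 2) (Xi t - 1) + b * Xj t)%:E)%E.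
  apply: ae_ge0_le_integral => //.
  - by move=> t _; rewrite lee_fin addr_ge0 ?Phi_ge0 // mulr_ge0 // sqr_ge0.
  - apply/measurable_EFinP; apply: (measurable_funS measurableT) => //.
    apply: (measurable_funD (f := fun t => Phi _ (Xj t - 1)) (g := fun t => b * Xi t ^+ 2)).
      exact: mPhi.
    apply: (measurable_funM (f := cst b) (g := fun t => Xi t ^+ 2)).
      exact: measurable_cst.
    exact: measurable_funX.
  - by move=> t _; rewrite lee_fin addr_ge0 ?Phi_ge0 // mulr_ge0.
  - apply/measurable_EFinP; apply: (measurable_funS measurableT) => //.
    apply: (measurable_funD (f := fun t => Phi _ (Xi t - 1)) (g := fun t => b * Xj t)).
      exact: mPhi.
    apply: (measurable_funM (f := cst b) (g := Xj)); [exact: measurable_cst | exact: mXj].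
  apply: filterS hae' => t ht Bt; rewrite lee_fin.
  have := @key R v (Xi t - 1) (Xj t - 1) v0.
  rewrite !subrK; apply => //.
  rewrite /B /= in Bt; lra.
have mPjB : measurable_fun B (fun t => (Phi ((v^+2 + 2 * v) / 2) (Xj t - 1))%:E).
  exact: measurable_funS mPj.
have mPiB : measurable_fun B (fun t => (Phi (v / 2) (Xi t - 1))%:E).
  exact: measurable_funS mPi.
have mXi2 : measurable_fun B (fun t => (Xi t ^+ 2)%:E).
  by apply/measurable_EFinP; apply: measurable_funS (measurable_funX 2 mXi).
have mXjB : measurable_fun B (fun t => (Xj t)%:E).
  by apply/measurable_EFinP; apply: measurable_funS mXj.
have e1 : (\int[P]_(t in B) (Phi ((v^+2 + 2 * v) / 2) (Xj t - 1) + b * Xi t ^+ 2)%:E =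
   \int[P]_(t in B) (Phi ((v^+2 + 2 * v) / 2) (Xj t - 1))%:E +
   b%:E * \int[P]_(t in B) (Xi t ^+ 2)%:E)%E.
  rewrite -ge0_integralZl_EFin //; last by move=> t _; rewrite lee_fin sqr_ge0.
  rewrite -ge0_integralD //.
  - by move=> t _; rewrite lee_fin Phi_ge0.
  - by move=> t _; rewrite lee_fin mulr_ge0 // sqr_ge0.
  - by apply: measurable_funeM.
have e2 : (\int[P]_(t in B) (Phi (v / 2) (Xi t - 1) + b * Xj t)%:E =
   \int[P]_(t in B) (Phi (v / 2) (Xi t - 1))%:E +
   b%:E * \int[P]_(t in B) (Xj t)%:E)%E.
  rewrite -ge0_integralZl_EFin //; last by move=> t _; rewrite lee_fin.
  rewrite -ge0_integralD //.
  - by move=> t _; rewrite lee_fin Phi_ge0.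
  - by move=> t _; rewrite lee_fin mulr_ge0.
  - by apply: measurable_funeM.
rewrite e1 e2 in h1.
have hfin : (\int[P]_(t in B) (Xi t ^+ 2)%:E)%E \is a fin_num.
  have hI : (\int[P]_(t in B) (Xi t ^+ 2)%:E <=
             \int[P]_(t in B) (cst ((1 + v/2)^+2)%:E) t)%E.
    apply: ge0_le_integral => //.
    - by move=> t _; rewrite lee_fin sqr_ge0.
    move=> t Bt; rewrite lee_fin /=; rewrite /B /= in Bt.
    have := Xi0 t; nra.
  rewrite integral_cst // in hI.
  have PBf : P B \is a fin_num.
    by rewrite ge0_fin_numE ?measure_ge0 // (le_lt_trans (probability_le1 _ mB)) ?ltey.
  rewrite ge0_fin_numE; last by apply: integral_ge0 => t _; rewrite lee_fin sqr_ge0.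
  apply: (le_lt_trans hI); rewrite -ge0_fin_numE ?fin_numM //.
  by rewrite mule_ge0 ?measure_ge0 // lee_fin sqr_ge0.
rewrite -(@leeD2rE _ (b%:E * \int[P]_(t in B) (Xi t ^+ 2)%:E)); last by rewrite fin_numM.
apply: (le_trans h1); rewrite leeD2l //.
by apply: lee_wpmul2l => //; rewrite lee_fin.
Qed.

Theorem lemma3p2 (d : measure_display) (T : measurableType d) (R : realType)
  (P : probability T R) (k : nat) (X0 : R) (X : nat -> T -> R) (tau : R) :
  1 < X0 ->
  (forall t, X 0%N t = X0) ->
  (forall i, (1 <= i <= k)%N -> measurable_fun setT (X i)) ->
  (forall i, (1 <= i <= k)%N -> forall t, 0 <= X i t) ->
  (forall i, (i < k)%N -> {ae P, forall t, 2 * (X i t - 1) <= X i.+1 t - 1}) ->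
  (forall i, (i < k)%N -> cond_exp_le P X i (X i.+1) (fun t => X i t ^+ 2)) ->
  1 + 4 * (X0 - 1) <= tau ->
  (P [set t | (tau ^+ (2 ^ k) <= X k t)%R] <= (48 * ((X0 - 1) / (tau - 1)) ^+ 2)%:E)%E.
Proof.
move=> hX0 hX0t hm hnn hae hce htau.
have tau1 : 1 < tau by lra.
pose v i := tau ^+ (2 ^ i) - 1.
have vpos i : 0 < v i.
  by rewrite /v subr_gt0 exprn_egt1 // -lt0n expn_gt0.
have vS i : v i.+1 = (v i)^+2 + 2 * v i.
  rewrite /v expnS mulnC exprM; set z := tau ^+ (2 ^ i); ring.
have mX i : (i <= k)%N -> measurable_fun setT (X i).
  case: i => [_|i hi]; last by apply: hm; rewrite hi.
  rewrite (_ : X 0%N = cst X0); first exact: measurable_cst.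
  by apply: funext => t; rewrite hX0t.
have nX i : (i <= k)%N -> forall t, 0 <= X i t.
  case: i => [_ t|i hi]; last by apply: hnn; rewrite hi.
  rewrite hX0t; lra.
pose e i := (\int[P]_t (Phi (v i / 2) (X i t - 1))%:E)%E.
have estep i : (i < k)%N -> (e i.+1 <= e i)%E.
  move=> ik; rewrite /e vS; apply: step => //.
  - exact: mX (ltnW ik).
  - exact: mX ik.
  - exact: nX (ltnW ik).
  - exact: nX ik.
  - exact: hae.
  apply: (hce i ik).
  apply: sub_sigma_algebra; exists i; split => //.
  exists [set` `]-oo, (1 + v i / 2)[]; split; first exact: measurable_itv.
  by apply/seteqP; split => t /=; rewrite in_itv /=.
have eind i : (i <= k)%N -> (e i <= e 0%N)%E.
  elim: i => [//|i IH] hi.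
  apply: le_trans (estep i hi) (IH (ltnW hi)).
have e0 : e 0%N = (Phi (v 0%N / 2) (X0 - 1))%:E.
  rewrite /e (eq_integral (fun _ => (Phi (v 0%N / 2) (X0 - 1))%:E)); last first.
    by move=> t _; rewrite hX0t.
  rewrite integral_cst //; set m := (X in (_ * X)%E).
  have -> : m = 1%E by rewrite /m; exact: probability_setT.
  by rewrite mule1.
have v0 : v 0%N = tau - 1 by rewrite /v expn0 expr1.
set S := [set t | (tau ^+ (2 ^ k) <= X k t)%R].
have mS : measurable S.
  have := mX k (leqnn k) measurableT _ (measurable_itv `[(tau ^+ (2^k)), +oo[).
  rewrite setTI.
  suff -> : S = X k @^-1` `[(tau ^+ (2^k)), +oo[ by [].
  by apply/seteqP; split => t /=; rewrite in_itv /= andbT.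
have mPk : measurable_fun setT (fun t => (Phi (v k / 2) (X k t - 1))%:E).
  by apply/measurable_EFinP; apply: mPhi; exact: mX.
have hPS : (P S <= e k)%E.
  apply: (le_trans (y := (\int[P]_(t in S) (cst 1%E) t)%E)).
    by rewrite (@integral_cst _ _ _ P S mS 1%E) mul1e.
  apply: (le_trans (y := (\int[P]_(t in S) (Phi (v k / 2) (X k t - 1))%:E)%E)).
    apply: ge0_le_integral => //.
      exact: measurable_funS mPk.
    move=> t St; rewrite /= lee_fin Phi_ge //.
      by have := vpos k; lra.
    by rewrite /S /= in St; have := vpos k; rewrite /v; lra.
  apply: ge0_subset_integral => //.
  by move=> t _; rewrite lee_fin Phi_ge0.
apply: (le_trans hPS); apply: (le_trans (eind k (leqnn k))); rewrite e0 lee_fin v0.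
apply: (le_trans (@Phi_le_sq R ((tau - 1) / 2) (X0 - 1) _ _)); [lra | lra |].
rewrite (_ : (X0 - 1) / ((tau - 1) / 2) = 2 * ((X0 - 1) / (tau - 1))); last by field; lra.
rewrite exprMn; have := sqr_ge0 ((X0 - 1) / (tau - 1)); nra.
Qed.
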